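(* Let $(X,\mathbb{Z}^k,T)$ be a $\mathbb{Z}^k$-action, let $d$ be a compatible metric on $X$, let $1\le h\le k$, and let $V\subseteq\mathbb{R}^k$ be an $h$-dimensional linear subspace. Then the quantity $$\lim_{\epsilon\to0}\ \liminf_{N\to\infty}\frac{\mathrm{Widim}_\epsilon\big(X,d^T_{B_r(V)\cap[-N,N]^k}\big)}{\mathrm{vol}_h\big(V\cap[-N,N]^k\big)}$$ is the same for every $r>\sqrt{k}/2$.
   Context: A $\mathbb{Z}^k$-action $(X,\mathbb{Z}^k,T)$ is a compact metric space with a continuous action $T\colon\mathbb{Z}^k\times X\to X$, $(n,x)\mapsto T^nx$. An $\epsilon$-embedding of $(X,d)$ is a continuous $f\colon X\to Y$ with $f(x)=f(x')\Rightarrow d(x,x')<\epsilon$. $\mathrm{Widim}_\epsilon(X,d)$ is the minimal topological dimension of a compact metric space $K$ admitting an $\epsilon$-embedding $X\to K$. $d^T_\Omega(x,x')=\max_{n\in\Omega}d(T^nx,T^nx')$ for finite $\Omega\subset\mathbb{Z}^k$. $B_r(V)=\{u\in\mathbb{Z}^k: |u-w|<r\text{ for some }w\in V\}$. $[-N,N]^k$ is the integer cube, or the real cube when intersected with $V$. $\mathrm{vol}_h$ is $h$-dimensional volume in $V$. *)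

(* Defs.v *)
From HB Require Import structures.
From mathcomp Require Import all_boot all_order all_algebra.
From mathcomp Require Import all_classical all_reals all_analysis.
Set Implicit Arguments. Unset Strict Implicit. Unset Printing Implicit Defensive.
Import Order.TTheory GRing.Theory Num.Theory.
Local Open Scope classical_set_scope.
Local Open Scope ring_scope.

Section Defs.
Variable R : realType.

Definition compatible_metric (X : topologicalType) (d : X -> X -> R) : Prop :=
  [/\ (forall x y, 0 <= d x y),
      (forall x y, d x y = 0 <-> x = y),
      (forall x y, d x y = d y x),
      (forall x y z, d x z <= d x y + d y z) &
      (forall A : set X, open A <->
         (forall x, A x -> exists2 e : R, 0 < e & [set y | d x y < e] `<=` A))].

Definition compact_metrizable (K : topologicalType) : Prop :=
  compact [set: K] /\ exists dK : K -> K -> R, compatible_metric dK.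

(* dim K <= n : every finite open cover has a finite open refinement
   of order <= n (each point lies in at most n+1 members). *)
Definition covdim_le (K : topologicalType) (n : nat) : Prop :=
  forall (I : finType) (U : I -> set K),
    (forall i, open (U i)) -> (forall x, exists i, U i x) ->
    exists (J : finType) (W : J -> set K),
      [/\ (forall j, open (W j)), (forall x, exists j, W j x),
          (forall j, exists i, W j `<=` U i) &
          (forall x, (#|[pred j | `[< W j x >]]| <= n.+1)%N)].

Definition eps_embedding (X K : topologicalType) (rho : X -> X -> R) (eps : R)
    (f : X -> K) : Prop :=
  continuous f /\ forall x x', f x = f x' -> rho x x' < eps.

Definition Widim (X : topologicalType) (rho : X -> X -> R) (eps : R) : \bar R :=
  ereal_inf [set (n%:R)%:E | n in
    [set n : nat | exists (K : topologicalType) (f : X -> K),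
        compact_metrizable K /\ covdim_le K n /\ eps_embedding rho eps f]].

Definition Zk_action (k : nat) (X : topologicalType)
    (T : 'rV[int]_k -> X -> X) : Prop :=
  [/\ (forall x, T 0 x = x),
      (forall m n x, T (m + n) x = T m (T n x)) &
      (forall n, continuous (T n))].

Definition enorm (k : nat) (v : 'rV[R]_k) : R :=
  Num.sqrt (\sum_(i < k) v ord0 i ^+ 2).

Definition inBr (k : nat) (V : {vspace 'rV[R]_k}) (r : R) (u : 'rV[int]_k) : Prop :=
  exists2 w : 'rV[R]_k, w \in V & enorm (map_mx (fun z : int => z%:~R) u - w) < r.

(* enumeration of the integer cube [-N,N]^k *)
Definition cube_pt (k N : nat) (c : {ffun 'I_k -> 'I_(N.*2.+1)}) : 'rV[int]_k :=
  \row_i ((c i : nat)%:Z - N%:Z).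

(* d^T_Omega with Omega = B_r(V) \cap [-N,N]^k (a finite set containing 0) *)
Definition dT_Omega (k : nat) (X : topologicalType) (d : X -> X -> R)
    (T : 'rV[int]_k -> X -> X) (V : {vspace 'rV[R]_k}) (r : R) (N : nat)
    (x x' : X) : R :=
  \big[Num.max/0]_(c : {ffun 'I_k -> 'I_(N.*2.+1)} | `[< inBr V r (cube_pt c) >])
     d (T (cube_pt c) x) (T (cube_pt c) x').

Definition Vcube (k : nat) (V : {vspace 'rV[R]_k}) (N : nat) : set 'rV[R]_k :=
  [set w | w \in V /\ forall i, `|w ord0 i| <= N%:R].

Fixpoint iint (n : nat) (g : seq R -> \bar R) : \bar R :=
  match n with
  | 0 => g [::]
  | n'.+1 => (\int[@lebesgue_measure R]_(t in [set: R]) iint n' (fun s => g (t :: s)))%E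
  end.

Definition Vparam (k : nat) (V : {vspace 'rV[R]_k}) (t : seq R) : 'rV[R]_k :=
  \sum_(i < \dim V) nth 0 t i *: tnth (vbasis V) i.

Definition Vgram (k : nat) (V : {vspace 'rV[R]_k}) : 'M[R]_(\dim V) :=
  \matrix_(i, j) (tnth (vbasis V) i *m (tnth (vbasis V) j)^T) ord0 ord0.

(* vol_h(S) for S \subset V (h = \dim V): area formula
   sqrt(det Gram) * int_{R^h} 1_S(sum_i t_i b_i) dt *)
Definition volV (k : nat) (V : {vspace 'rV[R]_k}) (S : set 'rV[R]_k) : \bar R :=
  ((Num.sqrt (\det (Vgram V)))%:E *
     iint (\dim V) (fun t => (\1_S (Vparam V t))%:E))%E.

Definition widim_ratio_liminf (k : nat) (X : topologicalType) (d : X -> X -> R)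
    (T : 'rV[int]_k -> X -> X) (V : {vspace 'rV[R]_k}) (r eps : R) : \bar R :=
  limn_einf (fun N : nat =>
    (Widim (dT_Omega d T V r N) eps * ((fine (volV V (Vcube V N)))^-1)%:E)%E).

End Defs.

(* Main.v *)
Require Import Defs.
From HB Require Import structures.
From mathcomp Require Import all_boot all_order all_algebra.
From mathcomp Require Import all_classical all_reals all_analysis.
From mathcomp Require Import ring lra.
Import Order.TTheory GRing.Theory Num.Theory.
Local Open Scope classical_set_scope.
Local Open Scope ring_scope.

From mathcomp Require Import zify.
Lemma dball_open (R : realType) (X : topologicalType) (d : X -> X -> R) x e :
  compatible_metric d -> open [set y | d x y < e].
Proof.
case=> d0 dE dsym dtri dopen; apply/dopen => y /= Hy.
exists (e - d x y); first by rewrite subr_gt0.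
move=> z /= Hz; have := dtri x y z; lra.
Qed.

Lemma dball_nbhs (R : realType) (X : topologicalType) (d : X -> X -> R) x e :
  compatible_metric d -> 0 < e -> nbhs x [set y | d x y < e].
Proof.
move=> dc e0; apply: open_nbhs_nbhs; split; first exact: dball_open.
by case: dc => _ dE _ _ _ /=; rewrite (proj2 (dE x x) erefl).
Qed.

Lemma nbhs_dball (R : realType) (X : topologicalType) (d : X -> X -> R) x A :
  compatible_metric d -> nbhs x A -> exists2 e, 0 < e & [set y | d x y < e] `<=` A.
Proof.
case=> d0 dE dsym dtri dopen; rewrite nbhsE => -[B [oB Bx] BA].
have [e e0 eB] := (proj1 (dopen B) oB) x Bx.
by exists e => // y /eB /BA.
Qed.

Lemma unif_cont (R : realType) (X : topologicalType) (d : X -> X -> R) (g : X -> X) :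
  compact [set: X] -> compatible_metric d -> continuous g ->
  forall e : R, 0 < e -> exists2 δ, 0 < δ & forall a b, d a b < δ -> d (g a) (g b) < e.
Proof.
move=> cX dc gc e e0.
have : \forall δ \near 0^'+, [set: X] `<=` (fun a => forall b, d a b < δ -> d (g a) (g b) < e).
  apply: (proj1 (compact_near_coveringP _) cX) => x _.
  have [η η0 Hη] : exists2 η, 0 < η & [set y | d x y < η] `<=` g @^-1` [set z | d (g x) z < e / 2].
    apply: nbhs_dball => //; apply: gc; apply: dball_nbhs => //; lra.
  exists ([set y | d x y < η/2], [set δ | 0 < δ < η/2]).
    split => /=; first by apply: dball_nbhs => //; lra.
    exists (η/2) => /=; first lra.
    move=> y /= Hy y0; rewrite sub0r normrN gtr0_norm // in Hy; lra.
  case: (dc) => d0 dE dsym dtri _.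
  move=> [x' δ] /= [Hx' /andP[δ0 δη]] b Hb.
  have H1 : d x b < η by have := dtri x x' b; lra.
  have H2 : d x x' < η by lra.
  have /= := Hη _ H1; have /= := Hη _ H2; rewrite dsym => E1 E2.
  have := dtri (g x') (g x) (g b); lra.
move=> H.
have [δ [δ0 Hδ]] := filter_ex (filterI (nbhs_right_gt 0) H).
by exists δ => // a b; apply: Hδ.
Qed.
Lemma liminf_le (R : realType) (u v : (\bar R)^nat) :
  (forall n, (u n <= v n)%E) -> (limn_einf u <= limn_einf v)%E.
Proof.
move=> uv; rewrite !limn_einf_lim.
rewrite (cvg_lim _ (@cvg_einfs_sup _ u)) // (cvg_lim _ (@cvg_einfs_sup _ v)) //.
apply: ge_ereal_sup => _ [n _ <-].
apply: le_trans (ereal_sup_ubound _); last by exists n.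
rewrite /einfs /=; apply/ereal_infP => _ [m /= nm <-].
apply: le_trans (uv m); apply: ereal_inf_lbound; by exists m.
Qed.
Lemma enorm_ge0 (R : realType) k (a : 'rV[R]_k) : 0 <= enorm a.
Proof. exact: sqrtr_ge0. Qed.

Lemma coord_le_enorm (R : realType) k (a : 'rV[R]_k) i : `|a ord0 i| <= enorm a.
Proof.
rewrite /enorm -sqrtr_sqr ler_sqrt; last by apply: sumr_ge0 => j _; exact: sqr_ge0.
rewrite (bigD1 i) //= lerDl; apply: sumr_ge0 => j _; exact: sqr_ge0.
Qed.

Lemma int_norm_le (R : realType) (z : int) (N : nat) :
  (`|(z%:~R : R)| <= N%:R) -> `|z| <= N%:Z.
Proof.
by rewrite -intr_norm -(ler_int R).
Qed.

Lemma geom (R : realType) (k : nat) (V : {vspace 'rV[R]_k}) (r1 r2 : R) :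
  Num.sqrt (k%:R) / 2 < r1 ->
  exists M : nat, forall (N : nat) (u : 'rV[int]_k),
    (forall i, `|u ord0 i| <= N%:Z) -> inBr V r2 u ->
    exists z : 'rV[int]_k, [/\ forall i, `|z ord0 i| <= N%:Z, inBr V r1 z &
      forall i, `|(u - z) ord0 i| <= M%:Z].
Proof.
move=> hr1.
exists (Num.truncn (2 * r2 + 1)).+1 => N u uN [w wV hw].
have r2p : 0 < r2 by apply: le_lt_trans hw; exact: enorm_ge0.
have Np : 0 <= (N%:R : R) by [].
set s : R := N%:R / (N%:R + r2).
have s0 : 0 <= s by apply: divr_ge0 => //; lra.
have sE : s * (N%:R + r2) = N%:R by rewrite /s mulfVK //; apply/negP => /eqP; lra.
have s1 : s <= 1 by nra.
pose fl i := Num.floor (s * w ord0 i + 1/2).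
pose z : 'rV[int]_k := \row_i fl i.
have key i : [/\ - (N%:R : R) <= s * w ord0 i <= N%:R,
     `|(u ord0 i)%:~R - s * w ord0 i| < 2 * r2 &
     `|(fl i)%:~R - s * w ord0 i| <= 1/2 ].
  have := @coord_le_enorm _ _ (map_mx (fun z : int => z%:~R) u - w) i.
  rewrite !mxE => /le_lt_trans /(_ hw); rewrite ltr_norml => /andP[h1 h2].
  have := uN i; rewrite -(ler_int R) intr_norm ler_norml => /andP[h3 h4].
  have h5 : 0 <= s * (N%:R + r2 - w ord0 i) by apply: mulr_ge0 => //; lra.
  have h6 : 0 <= s * (w ord0 i + N%:R + r2) by apply: mulr_ge0 => //; lra.
  have h7 : 0 <= (1 - s) * (N%:R + r2 - w ord0 i) by apply: mulr_ge0 => //; lra.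
  have h8 : 0 <= (1 - s) * (w ord0 i + N%:R + r2) by apply: mulr_ge0 => //; lra.
  have := floor_itv (s * w ord0 i + 1/2); rewrite intrD => /andP[h9 h10].
  rewrite ltr_norml ler_norml; split.
  - apply/andP; split; nra.
  - apply/andP; split; nra.
  - apply/andP; split; rewrite /fl; lra.
exists z; split.
- move=> i; rewrite mxE; have [/andP[a1 a2] _ /ltac:(rewrite ler_norml) /andP[a3 a4]] := key i.
  rewrite ler_norml; apply/andP; split.
  + rewrite -ltzD1 -(ltr_int R) intrD; lra.
  + rewrite -ltzD1 -(ltr_int R) intrD; lra.
- exists (s *: w); first exact: memvZ.
  apply: le_lt_trans hr1.
  have q0 : 0 <= Num.sqrt (k%:R : R) / 2 by apply: divr_ge0 => //; exact: sqrtr_ge0.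
  rewrite /enorm -[X in _ <= X](ger0_norm q0) -sqrtr_sqr ler_sqrt; last exact: sqr_ge0.
  rewrite expr_div_n sqr_sqrtr //.
  have -> : (k%:R : R) / 2 ^+ 2 = \sum_(i < k) (1/4 : R).
    by rewrite sumr_const card_ord -mulr_natl; field.
  apply: ler_sum => i _; rewrite !mxE.
  have [_ _] := key i; rewrite ler_norml => /andP[c1 c2].
  nra.
- move=> i; apply: int_norm_le; rewrite !mxE.
  have [_ b1 b2] := key i.
  have := truncnS_gt (2 * r2 + 1).
  move: b1 b2; rewrite ltr_norml ler_norml => /andP[b1 b2] /andP[b3 b4] hM.
  rewrite intrB.
  have h : `|((u ord0 i)%:~R : R) - (fl i)%:~R| <= 2 * r2 + 1.
    rewrite ler_norml; apply/andP; split; lra.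
  by apply: le_trans h _; exact: ltW.
Qed.

Lemma Widim_le (R : realType) (X : topologicalType) (rho1 rho2 : X -> X -> R)
  (e1 e2 : R) :
  (forall x x', rho1 x x' < e1 -> rho2 x x' < e2) ->
  (Widim rho2 e2 <= Widim rho1 e1)%E.
Proof.
move=> H; apply: ereal_inf_le_tmp; apply: image_subset.
move=> n [K [f [cK [dK [cf ef]]]]]; exists K, f; split=> //; split=> //.
by split=> // x x' /ef; exact: H.
Qed.

Lemma cube_pt_bound k N (c : {ffun 'I_k -> 'I_(N.*2.+1)}) i :
  `|cube_pt c ord0 i| <= N%:Z.
Proof.
rewrite mxE; case: (c i) => [m /= hm]; rewrite ler_norml; apply/andP; split; lia.
Qed.

Lemma cube_pt_surj k N (z : 'rV[int]_k) :
  (forall i, `|z ord0 i| <= N%:Z) -> exists c : {ffun 'I_k -> 'I_(N.*2.+1)}, cube_pt c = z.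
Proof.
move=> hz; exists [ffun i => inord (absz (z ord0 i + N%:Z)%R)].
apply/rowP => i; rewrite !mxE ffunE inordK; have := hz i; rewrite (_ : ord0 = 0) //; lia.
Qed.

Lemma le_bigmaxR (R : realType) (I : finType) (P : pred I) (F : I -> R) j :
  P j -> F j <= \big[Num.max/0]_(i | P i) F i.
Proof. by move=> Pj; rewrite (bigD1 j) //= le_max lexx. Qed.

Lemma bigmax_ltR (R : realType) (I : finType) (P : pred I) (F : I -> R) e :
  0 < e -> (forall i, P i -> F i < e) -> \big[Num.max/0]_(i | P i) F i < e.
Proof.
move=> e0 H; elim/big_ind: _ => // a b ha hb; by rewrite gt_max ha hb.
Qed.

Lemma fin_delta (R : realType) (I : finType) (P : I -> R -> Prop) :
  (forall i δ δ', 0 < δ' <= δ -> P i δ -> P i δ') ->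
  (forall i, exists2 δ, 0 < δ & P i δ) -> exists2 δ, 0 < δ & forall i, P i δ.
Proof.
move=> mono H.
suff [δ δ0 Hδ] : exists2 δ, 0 < δ & forall i, i \in enum I -> P i δ.
  by exists δ => // i; apply: Hδ; rewrite mem_enum.
elim: (enum I) => [|j s [δ δ0 Hδ]]; first by exists 1.
have [δj δj0 Hj] := H j.
exists (Num.min δ δj); first by rewrite lt_min δ0 δj0.
move=> i; rewrite inE => /orP[/eqP ->|iS].
  by apply: mono Hj; rewrite lt_min δ0 δj0 /= ge_min lexx orbT.
by apply: mono (Hδ _ iS); rewrite lt_min δ0 δj0 /= ge_min lexx.
Qed.

Lemma dT_compare (R : realType) k (X : topologicalType) (T : 'rV[int]_k -> X -> X)
  (d : X -> X -> R) (V : {vspace 'rV[R]_k}) (r1 r2 : R) :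
  compact [set: X] -> Zk_action T -> compatible_metric d ->
  Num.sqrt (k%:R) / 2 < r1 ->
  forall e : R, 0 < e -> exists2 δ, 0 < δ & forall N x x',
    dT_Omega d T V r1 N x x' < δ -> dT_Omega d T V r2 N x x' < e.
Proof.
move=> cX [T0 TD Tc] dc hr1 e e0.
have [M HM] := @geom R k V r1 r2 hr1.
pose P := fun (cf : {ffun 'I_k -> 'I_(M.*2.+1)}) (δ : R) =>
  forall a b, d a b < δ -> d (T (cube_pt cf) a) (T (cube_pt cf) b) < e.
have Pm : forall cf δ δ', 0 < δ' <= δ -> P cf δ -> P cf δ'.
  move=> cf δ δ' /andP[_ h] H a b hab; apply: H; exact: lt_le_trans hab h.
have Pe : forall cf, exists2 δ, 0 < δ & P cf δ.
  by move=> cf; apply: unif_cont.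
have [δ δ0 Hδ] := @fin_delta R _ P Pm Pe.
exists δ => // N x x' H.
apply: bigmax_ltR => // c /asboolP hc.
have [z [zN zr1 zM]] := HM N (cube_pt c) (@cube_pt_bound k N c) hc.
have [c1 c1E] := @cube_pt_surj k N z zN.
have [cf cfE] := @cube_pt_surj k M _ zM.
have -> : cube_pt c = cube_pt cf + cube_pt c1 by rewrite cfE c1E subrK.
rewrite !TD; apply: Hδ.
apply: le_lt_trans H; rewrite /dT_Omega.
apply: (@le_bigmaxR R _ (fun c => `[< inBr V r1 (cube_pt c) >])
  (fun c => d (T (cube_pt c) x) (T (cube_pt c) x')) c1).
by apply/asboolP; rewrite c1E.
Qed.

Lemma iint_ge0 (R : realType) n (g : seq R -> \bar R) :
  (forall s, (0 <= g s)%E) -> (0 <= iint n g)%E.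
Proof.
elim: n g => [|n IH] g g0 /=; first exact: g0.
by apply: integral_ge0 => t _; apply: IH.
Qed.

Lemma ratio_ge0 (R : realType) k (V : {vspace 'rV[R]_k}) N :
  0 <= (fine (volV V (Vcube V N)))^-1.
Proof.
rewrite invr_ge0; apply: fine_ge0; apply: mule_ge0.
  by rewrite lee_fin sqrtr_ge0.
by apply: iint_ge0 => s; rewrite lee_fin indicE; case: (_ \in _).
Qed.

Lemma g_mono (R : realType) k (X : topologicalType) (T : 'rV[int]_k -> X -> X)
  (d : X -> X -> R) (V : {vspace 'rV[R]_k}) r e e' :
  e <= e' -> (widim_ratio_liminf d T V r e' <= widim_ratio_liminf d T V r e)%E.
Proof.
move=> ee'; apply: liminf_le => N; apply: lee_wpmul2r; first by rewrite lee_fin ratio_ge0.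
by apply: Widim_le => x x' h; exact: lt_le_trans h ee'.
Qed.

Lemma g_compare (R : realType) k (X : topologicalType) (T : 'rV[int]_k -> X -> X)
  (d : X -> X -> R) (V : {vspace 'rV[R]_k}) (r1 r2 : R) :
  compact [set: X] -> Zk_action T -> compatible_metric d ->
  Num.sqrt (k%:R) / 2 < r1 ->
  forall e : R, 0 < e -> exists2 δ, 0 < δ &
    (widim_ratio_liminf d T V r2 e <= widim_ratio_liminf d T V r1 δ)%E.
Proof.
move=> cX TA dc hr1 e e0.
have [δ δ0 H] := @dT_compare R k X T d V r1 r2 cX TA dc hr1 e e0.
exists δ => //; apply: liminf_le => N; apply: lee_wpmul2r; first by rewrite lee_fin ratio_ge0.
by apply: Widim_le => x x'; apply: H.
Qed.

Lemma g_cvg (R : realType) k (X : topologicalType) (T : 'rV[int]_k -> X -> X)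
  (d : X -> X -> R) (V : {vspace 'rV[R]_k}) r :
  widim_ratio_liminf d T V r eps @[eps --> 0^'+] -->
  ereal_sup [set widim_ratio_liminf d T V r x | x in [set` Interval (BRight (0%R:R)) (BInfty R false)]].
Proof.
apply: nonincreasing_at_right_cvge => //.
by move=> a b _ _ ab; apply: g_mono.
Qed.

Lemma sup_le (R : realType) k (X : topologicalType) (T : 'rV[int]_k -> X -> X)
  (d : X -> X -> R) (V : {vspace 'rV[R]_k}) (r1 r2 : R) :
  compact [set: X] -> Zk_action T -> compatible_metric d ->
  Num.sqrt (k%:R) / 2 < r1 ->
  (ereal_sup [set widim_ratio_liminf d T V r2 x | x in [set` Interval (BRight (0%R:R)) (BInfty R false)]] <=
   ereal_sup [set widim_ratio_liminf d T V r1 x | x in [set` Interval (BRight (0%R:R)) (BInfty R false)]])%E.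
Proof.
move=> cX TA dc hr1; apply: ge_ereal_sup => _ [e he <-].
have e0 : 0 < e by move: he; rewrite /= in_itv /= andbT.
have [δ δ0 H] := @g_compare R k X T d V r1 r2 cX TA dc hr1 e e0.
apply: le_trans H _; apply: ereal_sup_ubound; exists δ => //=.
by rewrite in_itv /= δ0.
Qed.

Theorem proposition3p1 (R : realType) (k h : nat) (X : topologicalType)
    (T : 'rV[int]_k -> X -> X) (d : X -> X -> R) (V : {vspace 'rV[R]_k}) :
  compact [set: X] -> Zk_action T -> compatible_metric d ->
  (1 <= h)%N -> (h <= k)%N -> \dim V = h ->
  forall r1 r2 : R, Num.sqrt (k%:R) / 2 < r1 -> Num.sqrt (k%:R) / 2 < r2 ->
  exists L : \bar R,
    widim_ratio_liminf d T V r1 eps @[eps --> 0^'+] --> L /\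
    widim_ratio_liminf d T V r2 eps @[eps --> 0^'+] --> L.
Proof.
move=> cX TA dc _ _ _ r1 r2 h1 h2.
eexists; split; first exact: g_cvg.
have -> : ereal_sup [set widim_ratio_liminf d T V r1 x | x in [set` Interval (BRight (0%R:R)) (BInfty R false)]] =
  ereal_sup [set widim_ratio_liminf d T V r2 x | x in [set` Interval (BRight (0%R:R)) (BInfty R false)]].
  by apply: le_anti; rewrite !sup_le.
exact: g_cvg.
Qed.
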